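(* Prioritized planning with any given priority ordering is incomplete for the class of P-solvable MAPF instances: for every integer $M\ge 2$ and every strict partial order $\prec$ on $\{1,\dots,M\}$, there exists a P-solvable MAPF instance with agents $a_1,\dots,a_M$ such that prioritized planning with $\prec$ does not result in a solution.
   Context: A MAPF instance consists of a connected undirected graph $G=(V,E)$ and $M$ agents $a_1,\dots,a_M$; agent $a_i$ has a start vertex $s_i$ and a target vertex $t_i$, and start vertices are pairwise distinct, as are target vertices. Time is discrete; at each time step every agent either moves to an adjacent vertex or waits. A path for $a_i$ is a sequence $\pi_i=\langle \pi_i(0),\pi_i(1),\dots\rangle$ with $\pi_i(0)=s_i$, consecutive vertices equal or adjacent, and $\pi_i(t)=t_i$ for all $t\ge T_i$, where the arrival time $T_i$ is the least such time. Two agents collide if they occupy the same vertex at the same time, or traverse the same edge in opposite directions at the same time step. A solution is a collision-free set of paths, one per agent. A priority ordering is a strict partial order $\prec$ on $\{1,\dots,M\}$ ($a_i$ has higher priority than $a_j$ iff $i\prec j$). A solution $\{\pi_i\}$ is consistent with $\prec$ if higher priority agents never wait for lower priority agents, i.e. for every $i$ the arrival time $T_i$ of $\pi_i$ equals the minimum arrival time over all paths for $a_i$ that do not collide with any $\pi_k$ with $k\prec i$. A MAPF instance is P-solvable iff it has a solution consistent with some priority ordering. Prioritized planning with $\prec$: agents are processed in an order compatible with $\prec$; each agent $a_j$ is assigned a path of minimum arrival time among paths that do not collide with the already computed paths of all $a_k$ with $k\prec j$ (ties broken arbitrarily); it fails if some agent has no such path, and otherwise results in a solution iff the resulting plan is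 collision-free. *)

(* Defs.v *)
From mathcomp Require Import all_boot.
Set Implicit Arguments. Unset Strict Implicit. Unset Printing Implicit Defensive.

Section MAPF.
Variable V : finType.
Variable e : rel V.

Definition walk := nat -> V.

Definition arrived_from (p : walk) (t : V) (T : nat) : Prop :=
  forall k, T <= k -> p k = t.

Definition arrival_time (p : walk) (t : V) (T : nat) : Prop :=
  arrived_from p t T /\ forall T', arrived_from p t T' -> T <= T'.

Definition is_path (s t : V) (p : walk) : Prop :=
  p 0 = s /\
  (forall k, p k.+1 = p k \/ e (p k) (p k.+1)) /\
  exists T, arrived_from p t T.

(* Vertex collision or swap (same edge in opposite directions). *)
Definition collide (p q : walk) : Prop :=
  exists k, p k = q k \/ (p k = q k.+1 /\ p k.+1 = q k).

Definition undirected_connected : Prop :=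
  symmetric e /\ irreflexive e /\ forall x y : V, connect e x y.

Variable M : nat.
Variables (s t : 'I_M -> V).

Definition mapf_instance : Prop :=
  undirected_connected /\ injective s /\ injective t.

Definition solution (pi : 'I_M -> walk) : Prop :=
  (forall i, is_path (s i) (t i) (pi i)) /\
  (forall i j, i != j -> ~ collide (pi i) (pi j)).

(* Strict partial order on the agents; i ≺ j means a_i has higher priority. *)
Definition strict_partial_order (prec : 'I_M -> 'I_M -> Prop) : Prop :=
  (forall i, ~ prec i i) /\ (forall i j k, prec i j -> prec j k -> prec i k).

Definition avoids_higher (prec : 'I_M -> 'I_M -> Prop) (pi : 'I_M -> walk)
  (i : 'I_M) (p : walk) : Prop :=
  forall k, prec k i -> ~ collide p (pi k).

Definition min_arrival_avoiding (prec : 'I_M -> 'I_M -> Prop)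
  (pi : 'I_M -> walk) (i : 'I_M) (T : nat) : Prop :=
  (exists p, is_path (s i) (t i) p /\ avoids_higher prec pi i p /\
             arrival_time p (t i) T) /\
  (forall p T', is_path (s i) (t i) p -> avoids_higher prec pi i p ->
                arrival_time p (t i) T' -> T <= T').

(* A solution consistent with prec: higher priority agents never wait for
   lower priority ones. *)
Definition consistent_solution (prec : 'I_M -> 'I_M -> Prop)
  (pi : 'I_M -> walk) : Prop :=
  solution pi /\
  forall i, exists T, arrival_time (pi i) (t i) T /\
                      min_arrival_avoiding prec pi i T.

Definition P_solvable : Prop :=
  exists prec, strict_partial_order prec /\
    exists pi, consistent_solution prec pi.

(* A (successful) run of prioritized planning with prec: every agent j is
   assigned a path of minimum arrival time among the paths not colliding
   with the already computed paths of all a_k with k ≺ j.  Ties may be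
   broken arbitrarily, so any such family is a possible run; the assignment
   of agent j only depends on the paths of agents k ≺ j, hence on no
   particular processing order compatible with prec. *)
Definition pp_run (prec : 'I_M -> 'I_M -> Prop) (pi : 'I_M -> walk) : Prop :=
  forall j, is_path (s j) (t j) (pi j) /\ avoids_higher prec pi j (pi j) /\
    exists T, arrival_time (pi j) (t j) T /\ min_arrival_avoiding prec pi j T.

(* Prioritized planning with prec results in a solution: some run (for some
   tie-breaking) succeeds and its plan is collision-free. *)
Definition pp_results_in_solution (prec : 'I_M -> 'I_M -> Prop) : Prop :=
  exists pi, pp_run prec pi /\ solution pi.

End MAPF.

(* Main.v *)
Require Import Defs.
From mathcomp Require Import all_boot.
From Stdlib Require Import Classical.

Lemma exists_minimal (M : nat) (prec : 'I_M -> 'I_M -> Prop) (b0 : 'I_M) :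
  strict_partial_order prec -> exists b, forall k, ~ prec k b.
Proof.
move=> [irr tr].
apply: NNPP => Hn.
have H : forall b, exists k, prec k b.
  move=> b; apply: NNPP => Hb; apply: Hn; exists b => k Hk; apply: Hb; by exists k.
have [f Hf] := fin_all_exists H.
have Hit : forall d x, prec (iter d.+1 f x) x.
  elim=> [|d IH] x /=; first exact: Hf.
  apply: tr (IH x); exact: Hf.
pose g := fun n : 'I_M.+1 => iter n f b0.
have : ~~ injectiveb g.
  apply/negP => /injectiveP /leq_card; by rewrite !card_ord ltnn.
move/injectivePn => [i [j Hij Hg]].
rewrite /g in Hg.
wlog lt : i j Hij Hg / i < j.
  move=> W; case: (ltngtP i j) => h; first exact: (W i j).
  - apply: (W j i) => //; by rewrite eq_sym.
  - by move/eqP: Hij; apply; apply: val_inj.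
have : prec (iter (j - i).-1.+1 f (iter i f b0)) (iter i f b0) by apply: Hit.
rewrite prednK ?subn_gt0 // -iterD subnK ?(ltnW lt) // Hg.
exact: irr.
Qed.

Section Cons.
Variable M : nat.
Variables a b : 'I_M.
Hypothesis ab : a != b.

Definition VV := option (option 'I_M).
Definition ee : rel VV := fun x y => (x == None) != (y == None).
Definition L (i : 'I_M) : VV := Some (Some i).
Definition W : VV := Some None.
Definition C : VV := None.
Definition ss (i : 'I_M) : VV := L i.
Definition tt (i : 'I_M) : VV := if i == a then W else if i == b then C else L i.

Lemma ee_L i y : ee (L i) y -> y = C.
Proof. by case: y. Qed.

Lemma inst : mapf_instance ee ss tt.
Proof.
split; [split; [|split]|split].
- by move=> x y; rewrite /ee eq_sym.
- by move=> x; rewrite /ee eqxx.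
- have hC : forall y, connect ee C y.
    move=> y; case: y => [y|]; first by apply: connect1.
    exact: connect0.
  move=> x y; case: x => [x|]; last exact: hC.
  apply: connect_trans (hC y); by apply: connect1.
- by move=> i j [].
- move=> i j; rewrite /tt.
  repeat case: ifP => /eqP ?; subst => //; try by move=> [].
  all: by move/eqP: ab.
Qed.
Definition pa : walk VV := fun k => if k == 0 then L a else if k == 1 then C else W.
Definition pb : walk VV := fun k => if k <= 1 then L b else C.
Definition pc (i : 'I_M) : walk VV := fun _ => L i.
Definition pis (i : 'I_M) : walk VV := if i == a then pa else if i == b then pb else pc i.
Definition prec' (i j : 'I_M) : Prop := i = a /\ j = b.

Lemma nocol_const (p : walk VV) v : (forall k, p k <> v) ->
  ~ collide p (fun _ => v) /\ ~ collide (fun _ => v) p.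
Proof.
move=> H; split; move=> [k [h|[h1 h2]]]; by [apply: (H k)|apply: (H k.+1)|].
Qed.

Arguments nocol_const {p v}.

Lemma LabF : L a <> L b.
Proof. by move=> [] /eqP; rewrite (negbTE ab). Qed.

Lemma nocol_ab : ~ collide pa pb /\ ~ collide pb pa.
Proof.
have := LabF.
by split; move=> [k [h|[h1 h2]]]; move: h2 h1 || move: h; case: k => [|[|k]]; rewrite /pa /pb /=;
  try (move=> *; congruence).
Qed.
Lemma pis_a : pis a = pa. Proof. by rewrite /pis eqxx. Qed.
Lemma pis_b : pis b = pb. Proof. by rewrite /pis eq_sym (negbTE ab) eqxx. Qed.
Lemma pis_c i : i != a -> i != b -> pis i = pc i.
Proof. by rewrite /pis => /negbTE -> /negbTE ->. Qed.
Lemma tt_a : tt a = W. Proof. by rewrite /tt eqxx. Qed.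
Lemma tt_b : tt b = C. Proof. by rewrite /tt eq_sym (negbTE ab) eqxx. Qed.
Lemma tt_c i : i != a -> i != b -> tt i = L i.
Proof. by rewrite /tt => /negbTE -> /negbTE ->. Qed.

Lemma path_a : is_path ee (L a) W pa.
Proof.
split=> //; split; last by exists 2 => k; rewrite /pa; case: k => [|[|k]].
by case=> [|[|k]]; rewrite /pa /=; [right|right|left].
Qed.
Lemma path_b : is_path ee (L b) C pb.
Proof.
split=> //; split; last by exists 2 => k; rewrite /pa; case: k => [|[|k]].
by case=> [|[|k]]; rewrite /pb /=; [left|right|left].
Qed.
Lemma path_c i : is_path ee (L i) (L i) (pc i).
Proof. split=> //; split; [by left| by exists 0]. Qed.

Lemma arr_a : arrival_time pa W 2.
Proof.
split; first by move=> k; rewrite /pa; case: k => [|[|k]].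
by move=> [|[|T']] H //; move: (H 1 isT).
Qed.
Lemma arr_b : arrival_time pb C 2.
Proof.
split; first by move=> k; rewrite /pb; case: k => [|[|k]].
by move=> [|[|T']] H //; move: (H 1 isT).
Qed.
Lemma arr_c i : arrival_time (pc i) (L i) 0.
Proof. by split. Qed.

Lemma sol : solution ee ss tt pis.
Proof.
split.
  move=> i; case: (eqVneq i a) => [->|ia]; first by rewrite pis_a tt_a; apply: path_a.
  case: (eqVneq i b) => [->|ib]; first by rewrite pis_b tt_b; apply: path_b.
  by rewrite pis_c // tt_c //; apply: path_c.
have hac : forall c, c != a -> forall k, pa k <> L c.
  by move=> c ca [|[|k]] //= [] /eqP; rewrite eq_sym (negbTE ca).
have hbc : forall c, c != b -> forall k, pb k <> L c.
  by move=> c cb [|[|k]] //= [] /eqP; rewrite eq_sym (negbTE cb).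
move=> i j.
case: (eqVneq i a) => [->|ia]; case: (eqVneq j a) => [->|ja] ij.
- by [].
- rewrite pis_a; case: (eqVneq j b) => [->|jb]; first by rewrite pis_b; case: nocol_ab.
  by rewrite pis_c //; case: (nocol_const (hac j ja)).
- case: (eqVneq i b) => [ib|ib]; first by rewrite ib pis_a pis_b; case: nocol_ab.
  by rewrite pis_a pis_c //; case: (nocol_const (hac i ia)).
move: ij.
case: (eqVneq i b) => [->|ib]; case: (eqVneq j b) => [->|jb] ij.
- by [].
- by rewrite pis_b pis_c //; case: (nocol_const (hbc j jb)).
- by rewrite pis_b pis_c //; case: (nocol_const (hbc i ib)).
rewrite !pis_c //; have : forall k, pc i k <> L j.
  by move=> k [] /eqP; rewrite (negbTE ij).
by case/nocol_const.
Qed.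

Lemma psolv : P_solvable ee ss tt.
Proof.
exists prec'; split.
  split; first by move=> i [-> e]; move/eqP: ab; apply.
  move=> i j k [_ hj] [hj2 _]; exfalso; move/eqP: ab; apply; by rewrite -hj2 hj.
exists pis; split; first exact: sol.
have [hpath hcol] := sol.
move=> i; case: (eqVneq i a) => [->|ia].
  exists 2; rewrite /min_arrival_avoiding pis_a tt_a; split; first exact: arr_a.
  split.
    exists pa; split; first exact: path_a; split; last exact: arr_a.
    by move=> k [_ e]; move/eqP: ab.
  move=> p T' [p0 [pstep _]] _ [HT _].
  case: T' HT => [|[|T']] HT //.
  - by move: (HT 0 isT); rewrite p0.
  - case: (pstep 0) => h; first by move: (HT 1 isT); rewrite h p0.
    by move: h; rewrite p0 (HT 1 isT).
case: (eqVneq i b) => [->|ib].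
  exists 2; rewrite /min_arrival_avoiding pis_b tt_b; split; first exact: arr_b.
  split.
    exists pb; split; first exact: path_b; split; last exact: arr_b.
    move=> k [-> _]; rewrite pis_a; by case: nocol_ab.
  move=> p T' [p0 [pstep _]] Hav [HT _].
  case: T' HT => [|[|T']] HT //.
  - by move: (HT 0 isT); rewrite p0.
  - apply: False_ind; apply: (Hav a) => //; exists 1; left.
    by rewrite pis_a (HT 1 isT).
exists 0; rewrite /min_arrival_avoiding pis_c // tt_c //; split; first exact: arr_c.
split=> //; exists (pc i); split; first exact: path_c; split; last exact: arr_c.
by move=> k [_ e]; move/eqP: ib.
Qed.
Lemma pp_fail (prec : 'I_M -> 'I_M -> Prop) :
  (forall k, ~ prec k b) -> ~ pp_results_in_solution ee ss tt prec.
Proof.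
move=> bmin [pi [run [hpath hcol]]].
have [_ [_ [T [[HT _] [_ Hmin]]]]] := run b.
rewrite tt_b in HT Hmin.
pose p0 : walk VV := fun k => if k == 0 then L b else C.
have T1 : T <= 1.
  apply: (Hmin p0 1).
  - split=> //; split; last by exists 1 => [[|k]].
    by case=> [|k]; [right|left].
  - by move=> k /bmin.
  - by split; [move=> [|k]|move=> [|T'] H //; move: (H 0 isT)].
have Hb : forall k, 1 <= k -> pi b k = C.
  by move=> k k1; apply: HT; apply: leq_trans k1.
have [pa0 [pastep [Ta HTa]]] := hpath a.
rewrite tt_a in HTa.
have key : forall n, pi a n = L a \/ exists k, 1 <= k /\ pi a k = C.
  elim=> [|n [IH|IH]]; [by left| |by right].
  case: (pastep n) => h; first by left; rewrite h.
  right; exists n.+1; split=> //; rewrite IH in h; exact: ee_L.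
case: (key Ta) => [|[k [k1 hk]]]; first by rewrite (HTa Ta (leqnn _)).
apply: (hcol a b ab); exists k; left; by rewrite hk Hb.
Unshelve. all: exact: b. Qed.
End Cons.

Theorem theorem2 (M : nat) (prec : 'I_M -> 'I_M -> Prop) :
  2 <= M -> strict_partial_order prec ->
  exists (V : finType) (e : rel V) (s t : 'I_M -> V),
    mapf_instance e s t /\ P_solvable e s t /\
    ~ pp_results_in_solution e s t prec.
Proof.
move=> M2 spo.
have M0 : 0 < M by apply: leq_trans M2.
have [b bmin] := @exists_minimal M prec (Ordinal M0) spo.
have [a ab] : exists a : 'I_M, a != b.
  case: (eqVneq (Ordinal M0) b) => [e|ne]; last by exists (Ordinal M0).
  exists (Ordinal M2); rewrite -e; apply/eqP => /(congr1 val) //.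
exists (VV M), (@ee M), (@ss M), (@tt M a b).
split; first exact: inst.
split; first exact: psolv.
exact: pp_fail.
Qed.
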